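(* Let $G=(V,E)$ be a connected graph with $n$ vertices and maximum degree $\Delta$, let $k\in\{2,\dots,n-1\}$, and let $\mathscr{S}$ be any $k$-block system for $G$. Then $\mu^+(\mathscr{S})\le\Delta-1+\frac1k$.
   Context: Potts configurations on $G$: $\sigma\in\Omega=[q]^V$, $q$ a positive integer. A $k$-block system for $G$ is a family $\mathscr{S}=\{S_v:v\in V\}$ of subsets of $V$ with $v\in S_v$, $|S_v|=k$ and $G[S_v]$ connected for all $v$. For $S\subseteq V$, $\partial S$ is the set of vertices of $V\setminus S$ with a neighbour in $S$. For $X\in\Omega$ and $c\in[q]^S$, $X^{(S,c)}$ equals $c$ on $S$ and $X$ off $S$; $\mu_{X,S}(c)$ is the number of monochromatic edges of $X^{(S,c)}$ incident with at least one vertex of $S$. A colour used by $c$ is free with respect to $X,S$ if it does not occur among $\{X(u):u\in\partial S\}$; $f(X,S,c)$ is the number of free colours used by $c$. $\mu^+_{X,S,f}=\max\{\mu_{X,S}(c)/(|S|-f): c\in[q]^S,\ f(X,S,c)=f\}$ (empty maximum $=0$), and $\mu^+(\mathscr{S})=\max_{S\in\mathscr{S}}\max_{X\in\Omega}\max_{f\in\{0,\dots,|S|-1\}}\mu^+_{X,S,f}$. *)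

(* Defs.v *)
From HB Require Import structures.
From mathcomp Require Import all_boot all_order all_algebra.
Set Implicit Arguments. Unset Strict Implicit. Unset Printing Implicit Defensive.
Import Order.TTheory GRing.Theory Num.Theory.

Definition simple_graph (V : finType) (e : rel V) : Prop :=
  symmetric e /\ irreflexive e.

Definition connected_graph (V : finType) (e : rel V) : Prop :=
  forall u w : V, connect e u w.

Definition induced_rel (V : finType) (e : rel V) (S : {set V}) : rel V :=
  fun x y => [&& e x y, x \in S & y \in S].

Definition induced_connected (V : finType) (e : rel V) (S : {set V}) : Prop :=
  forall u w, u \in S -> w \in S -> connect (induced_rel e S) u w.

Definition degree (V : finType) (e : rel V) (v : V) : nat := #|[set w | e v w]|.

Definition max_degree (V : finType) (e : rel V) : nat := \max_(v : V) degree e v.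

Definition block_system (V : finType) (e : rel V) (k : nat) (S : V -> {set V}) : Prop :=
  forall v, [/\ v \in S v, #|S v| = k & induced_connected e (S v)].

Definition vboundary (V : finType) (e : rel V) (S : {set V}) : {set V} :=
  [set u | (u \notin S) && [exists w in S, e u w]].

Definition config (V : finType) (q : nat) := {ffun V -> 'I_q}.

(* X^{(S,c)}: equals c on S and X off S (c given as a configuration on V,
   only its values on S are used). *)
Definition replace (V : finType) (q : nat) (X c : config V q) (S : {set V}) : config V q :=
  [ffun v => if v \in S then c v else X v].

Definition mu (V : finType) (e : rel V) (q : nat) (X c : config V q) (S : {set V}) : nat :=
  let Y := replace X c S in
  #|[set E : {set V} | [exists u, exists w,
       [&& E == [set u; w], e u w, Y u == Y w & (u \in S) || (w \in S)]]]|.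

Definition nfree (V : finType) (e : rel V) (q : nat) (X c : config V q) (S : {set V}) : nat :=
  #|[set a : 'I_q | [exists v in S, c v == a] &&
                    ~~ [exists u in vboundary e S, X u == a]]|.

Local Open Scope ring_scope.

(* mu^+_{X,S,f}, max over c in [q]^S (functions on the subtype of S), extended
   by X off S;  colourings of S with f free colours; empty max = 0 *)
Definition mu_plus_f (V : finType) (e : rel V) (q : nat) (X : config V q) (S : {set V}) (f : nat) : rat :=
  \big[Num.max/0]_(c : {ffun {v : V | v \in S} -> 'I_q})
     (let c' : config V q := [ffun v => if @insub _ (fun x => x \in S) _ v is Some s then c s else X v] in
      if nfree e X c' S == f then (mu e X c' S)%:R / (#|S| - f)%N%:R else 0).

Definition mu_plus (V : finType) (e : rel V) (q : nat) (S : V -> {set V}) : rat :=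
  \big[Num.max/0]_(v : V) \big[Num.max/0]_(X : config V q)
     \big[Num.max/0]_(f < #|S v|) mu_plus_f e X (S v) f.

(* Main.v *)
Require Import Defs.
From HB Require Import structures.
From mathcomp Require Import all_boot all_order all_algebra zify ring lra.
Import Order.TTheory GRing.Theory Num.Theory.
Set Implicit Arguments. Unset Strict Implicit. Unset Printing Implicit Defensive.

Lemma cross (T : finType) (r : rel T) (A : {set T}) x y :
  connect r x y -> x \in A -> y \notin A ->
  exists x', exists y', [/\ x' \in A, y' \notin A & r x' y'].
Proof.
move=> /connectP [p Hp ->]; elim: p x Hp => [|z p IH] x /=; first by move=> _ ->.
move=> /andP [rxz pz] xA yA; case zA: (z \in A); first exact: IH pz zA yA.
by exists x, z; rewrite zA.
Qed.

Lemma card_bigcup_le (I T : finType) (P : pred I) (F : I -> {set T}) :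
  (#|\bigcup_(i | P i) F i| <= \sum_(i | P i) #|F i|)%N.
Proof.
elim/big_rec2: _ => [|i U n _ IH]; first by rewrite cards0.
by apply: leq_trans (leq_card_setU _ _) _; rewrite leq_add2l.
Qed.

Definition edges_of (V : finType) (P : V -> V -> bool) : {set {set V}} :=
  [set E | [exists u, exists w, (E == [set u; w]) && P u w]].

Lemma edges_le (V : finType) (P Q : V -> V -> bool) (A : {set V}) :
  (forall u w, P u w -> exists2 x, x \in A & exists y, [set u; w] = [set x; y] /\ Q x y) ->
  (#|edges_of P| <= \sum_(x in A) #|[set y | Q x y]|)%N.
Proof.
move=> H.
have sub : edges_of P \subset \bigcup_(x in A) [set [set x; y] | y in [set y | Q x y]].
  apply/subsetP => E; rewrite inE => /existsP [u /existsP [w /andP [/eqP -> Puw]]].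
  have [x xA [y [-> Qxy]]] := H u w Puw.
  by apply/bigcupP; exists x => //; apply/imsetP; exists y; rewrite ?inE.
apply: leq_trans (subset_leq_card sub) _; apply: leq_trans (card_bigcup_le _ _) _.
by apply: leq_sum => x _; apply: leq_imset_card.
Qed.

Lemma edges_mono (V : finType) (P Q : V -> V -> bool) :
  (forall u w, P u w -> Q u w) -> edges_of P \subset edges_of Q.
Proof.
move=> H; apply/subsetP => E; rewrite !inE => /existsP [u /existsP [w /andP [a b]]].
by apply/existsP; exists u; apply/existsP; exists w; rewrite a H.
Qed.

Definition IA (V : finType) (e : rel V) (S A : {set V}) :=
  edges_of (fun u w => [&& e u w, u \in S, w \in S & (u \in A) || (w \in A)]).

Lemma in_pair_notin (V : finType) (u w x y : V) (A : {set V}) :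
  [set u; w] = [set x; y] -> x \notin A -> y \notin A -> (u \in A) || (w \in A) = false.
Proof.
move=> E xA yA.
have hu : u \in [set x; y] by rewrite -E !inE eqxx.
have hw : w \in [set x; y] by rewrite -E !inE eqxx orbT.
move: hu hw; rewrite !inE => /orP [] /eqP -> /orP [] /eqP ->;
by rewrite ?(negbTE xA) ?(negbTE yA).
Qed.

Lemma tree (V : finType) (e : rel V) (S A : {set V}) r :
  induced_connected e S -> r \in S -> r \notin A -> A \subset S ->
  (#|A| <= #|IA e S A|)%N.
Proof.
move=> conn rS.
have: forall n (A : {set V}), #|A| = n -> r \notin A -> A \subset S -> (#|A| <= #|IA e S A|)%N;
  last by move=> H; apply: H.
elim=> [|n IH] {}A cA rA AS; first by rewrite cA.
have [x0 x0A] : exists x0, x0 \in A.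
  by apply/set0Pn; rewrite -card_gt0 cA.
have [x [y [xA yA /and3P [exy xS yS]]]] := cross (conn x0 r (subsetP AS _ x0A) rS) x0A rA.
have cA' : #|A :\ x| = n by move: cA; rewrite (cardsD1 x A) xA add1n => -[].
have rA' : r \notin A :\ x by rewrite !inE (negbTE rA) andbF.
have AS' : A :\ x \subset S by apply: subset_trans AS; apply: subsetDl.
have := IH _ cA' rA' AS'; rewrite cA' => le.
rewrite cA; apply: leq_trans (proper_card _); first exact: le.
apply/properP; split.
  apply: edges_mono => u w /and4P [-> -> ->]; rewrite !inE /=.
  by case/orP => /andP [_ ->]; rewrite ?orbT.
exists [set x; y].
  rewrite inE; apply/existsP; exists x; apply/existsP; exists y.
  by rewrite eqxx exy xS yS xA.
rewrite inE; apply/negP => /existsP [u /existsP [w /andP [/eqP E /and4P [_ _ _ H]]]].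
by rewrite (in_pair_notin (esym E) (A := A :\ x)) ?inE ?eqxx // (negbTE yA) andbF in H.
Qed.

Definition ltv (V : finType) (u w : V) := (enum_rank u < enum_rank w)%N.

Lemma ltv_total (V : finType) (u w : V) : u != w -> ltv u w || ltv w u.
Proof.
move=> uw; rewrite /ltv; case: ltngtP => // /val_inj /enum_rank_inj E.
by rewrite E eqxx in uw.
Qed.

Lemma ltv_asym (V : finType) (u w : V) : ltv u w -> ltv w u = false.
Proof. by rewrite /ltv => h; apply/negbTE; rewrite -leqNgt ltnW. Qed.

Definition Mc (V : finType) (T : eqType) (e : rel V) (S : {set V}) (Y : V -> T) (a : T) :=
  edges_of (fun u w => [&& e u w, Y u == a, Y w == a & (u \in S) || (w \in S)]).

Definition Ac (V : finType) (T : eqType) (S : {set V}) (Y : V -> T) (a : T) :=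
  [set v in S | Y v == a].

Lemma card_disj_le (V : finType) (B C D : {set V}) :
  [disjoint B & C] -> B :|: C \subset D -> (#|B| + #|C| <= #|D|)%N.
Proof.
move=> dis sub; rewrite -cardsUI.
rewrite (disjoint_setI0 dis).
by rewrite cards0 addn0 subset_leq_card.
Qed.

Lemma nonfree_bound (V : finType) (T : eqType) (e : rel V) (S : {set V}) (Y : V -> T) (a : T) (D : nat) :
  simple_graph e -> (forall v, degree e v <= D)%N ->
  (#|Mc e S Y a| + #|IA e S (Ac S Y a)| <= #|Ac S Y a| * D)%N.
Proof.
move=> [esym eirr] hD; set A := Ac S Y a.
have inA v : (v \in A) = (v \in S) && (Y v == a) by rewrite inE.
pose mQ x y := e x y && ((y \notin S) || ((y \in A) && ltv x y)).
pose iQ x y := e x y && ((y \in S) && (y \notin A) || (y \in A) && ltv y x).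
have h1 : (#|Mc e S Y a| <= \sum_(x in A) #|[set y | mQ x y]|)%N.
  apply: edges_le => u w /and4P [euw Yu Yw uSwS].
  have uw : u != w by apply: contraTneq euw => ->; rewrite eirr.
  case uS: (u \in S); case wS: (w \in S); rewrite ?uS ?wS //= in uSwS.
  - case/orP: (ltv_total uw) => l.
      exists u; first by rewrite inA uS Yu.
      by exists w; split => //; rewrite /mQ euw inA wS Yw l orbT.
    exists w; first by rewrite inA wS Yw.
    by exists u; split; [exact: setUC | rewrite /mQ esym euw inA uS Yu l orbT].
  - exists u; first by rewrite inA uS Yu.
    by exists w; split => //; rewrite /mQ euw wS.
  - exists w; first by rewrite inA wS Yw.
    by exists u; split; [exact: setUC | rewrite /mQ esym euw uS].
have h2 : (#|IA e S A| <= \sum_(x in A) #|[set y | iQ x y]|)%N.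
  apply: edges_le => u w /and4P [euw uS wS uAwA].
  have uw : u != w by apply: contraTneq euw => ->; rewrite eirr.
  case uA: (u \in A); case wA: (w \in A); rewrite ?uA ?wA //= in uAwA.
  - case/orP: (ltv_total uw) => l.
      exists w => //.
      by exists u; split; [exact: setUC | rewrite /iQ esym euw uA l orbT].
    exists u => //.
    by exists w; split => //; rewrite /iQ euw wA l orbT.
  - exists u => //.
    by exists w; split => //; rewrite /iQ euw wS wA.
  - exists w => //.
    by exists u; split; [exact: setUC | rewrite /iQ esym euw uS uA].
apply: leq_trans (leq_add h1 h2) _; rewrite -big_split /=.
rewrite -sum_nat_const; apply: leq_sum => x xA.
apply: leq_trans (hD x); apply: card_disj_le.
  rewrite -setI_eq0; apply/eqP/setP => y; rewrite !inE /mQ /iQ.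
  case: (e x y) => //=; case yS: (y \in S); case yA: (y \in A) => //=.
    by case: (ltv x y) (ltv_asym (u:=x) (w:=y)) => //= ->.
  by move: yA; rewrite inA yS.
apply/subsetP => y; rewrite !inE /mQ /iQ; by case/orP => /andP [->].
Qed.

Lemma free_bound (V : finType) (T : eqType) (e : rel V) (S : {set V}) (Y : V -> T) (a : T) (D : nat) x0 y0 :
  simple_graph e -> (forall v, degree e v <= D)%N ->
  (forall u w, e u w -> u \in S -> w \notin S -> Y w != a) ->
  x0 \in Ac S Y a -> y0 \notin Ac S Y a -> e x0 y0 ->
  (2 * #|Mc e S Y a| + 1 <= #|Ac S Y a| * D)%N /\
  (2 * #|Mc e S Y a| <= #|Ac S Y a| * (#|Ac S Y a| - 1))%N.
Proof.
move=> [esym eirr] hD hf x0A y0A exy; set A := Ac S Y a.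
have inA v : (v \in A) = (v \in S) && (Y v == a) by rewrite inE.
have both u w : [&& e u w, Y u == a, Y w == a & (u \in S) || (w \in S)] ->
    [&& e u w, u \in A, w \in A & u != w].
  case/and4P => euw Yu Yw uSwS.
  have uw : u != w by apply: contraTneq euw => ->; rewrite eirr.
  case uS: (u \in S); case wS: (w \in S); rewrite ?uS ?wS //= in uSwS.
  - by rewrite euw !inA uS wS Yu Yw uw.
  - by move: (hf u w euw uS); rewrite wS Yw => /(_ isT).
  - by move: (hf w u (etrans (esym w u) euw) wS); rewrite uS Yu => /(_ isT).
pose F x := [set y | e x y && (y \in A) && ltv x y].
pose G x := [set y | e x y && (y \in A) && ltv y x].
have h1 : (#|Mc e S Y a| <= \sum_(x in A) #|F x|)%N.
  apply: edges_le => u w /both /and4P [euw uA wA uw].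
  case/orP: (ltv_total uw) => l.
    by exists u => //; exists w; split => //; rewrite in_set -inA euw wA l.
  by exists w => //; exists u; split; [exact: setUC | rewrite in_set -inA esym euw uA l].
have h2 : (#|Mc e S Y a| <= \sum_(x in A) #|G x|)%N.
  apply: edges_le => u w /both /and4P [euw uA wA uw].
  case/orP: (ltv_total uw) => l.
    by exists w => //; exists u; split; [exact: setUC | rewrite in_set -inA esym euw uA l].
  by exists u => //; exists w; split => //; rewrite in_set -inA euw wA l.
pose H x := [set y in A | e x y].
have hFG x : (#|F x| + #|G x| <= #|H x|)%N.
  apply: card_disj_le.
    rewrite -setI_eq0; apply/eqP/setP => y; rewrite !inE.
    by case: (ltv x y) (ltv_asym (u:=x) (w:=y)) => //= => [->|_]; rewrite ?andbF.
  by apply/subsetP => y; rewrite !inE => /orP [] /andP [] /andP [-> ->].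
have h3 : (2 * #|Mc e S Y a| <= \sum_(x in A) #|H x|)%N.
  rewrite mul2n -addnn; apply: leq_trans (leq_add h1 h2) _; rewrite -big_split.
  by apply: leq_sum => x _; apply: hFG.
have hH x : (#|H x| <= D)%N.
  apply: leq_trans (hD x); apply: subset_leq_card; apply/subsetP => y.
  by rewrite !inE => /andP [_ ->].
have hH0 : (#|H x0| < D)%N.
  apply: leq_trans (hD x0); apply: proper_card; apply/properP; split.
    by apply/subsetP => y; rewrite !inE => /andP [_ ->].
  by exists y0; [rewrite inE | rewrite in_set -?inA (negbTE y0A)].
have hHA x : x \in A -> (#|H x| <= #|A| - 1)%N.
  move=> xA; rewrite (cardsD1 x A) xA add1n subSS subn0.
  apply: subset_leq_card; apply/subsetP => y; rewrite !inE => /andP [-> exy'].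
  by rewrite andbT; apply: contraTneq exy' => ->; rewrite eirr.
split.
  apply: leq_trans (leq_add h3 (leqnn 1)) _.
  rewrite (bigD1 x0) //= -addnA addnC -addnA add1n.
  apply: leq_trans (leq_add (leqnn _) hH0) _.
  have -> : #|A| = #|A :\ x0|.+1 by rewrite (cardsD1 x0 A) x0A.
  rewrite mulSn addnC leq_add2l.
  apply: (@leq_trans (\sum_(i in A | i != x0) D)); first by apply: leq_sum => i _; apply: hH.
  rewrite sum_nat_const.
  rewrite leq_mul2r; apply/orP; right; apply: eq_leq; apply: eq_card => i.
  rewrite in_setD1 andbC; reflexivity.
apply: leq_trans h3 _; rewrite -sum_nat_const; exact: leq_sum.
Qed.

Lemma arith (m s D : nat) : (2 <= D)%N -> (1 <= s)%N ->
  (2 * m + 1 <= s * D)%N -> (2 * m <= s * (s - 1))%N -> (m <= (D - 1) * (s - 1))%N.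
Proof.
move=> hD hs h1 h2.
case: (ltnP s 3) => hs3.
  have [E|E] : s = 1 \/ s = 2 by lia.
    by rewrite E in h1 h2 *; lia.
  by rewrite E in h1 h2 *; nia.
case: (ltnP D 3) => hD3.
  have E : D = 2 by lia.
  by rewrite E in h1 *; nia.
nia.
Qed.

Lemma mu_le (V : finType) (e : rel V) (q : nat) (X c : config V q) (B : {set V}) :
  (mu e X c B <= \sum_(a : 'I_q) #|Mc e B (replace X c B) a|)%N.
Proof.
rewrite /mu /=; set Y := replace X c B.
apply: leq_trans (card_bigcup_le _ _); apply: subset_leq_card.
apply/subsetP => E; rewrite inE => /existsP [u /existsP [w /and4P [/eqP -> euw Yuw uw]]].
apply/bigcupP; exists (Y u) => //; rewrite inE; apply/existsP; exists u; apply/existsP; exists w.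
by rewrite eqxx euw eqxx -(eqP Yuw) eqxx uw.
Qed.

Definition freec (V : finType) (e : rel V) (q : nat) (X c : config V q) (B : {set V}) (a : 'I_q) :=
  [exists v in B, c v == a] && ~~ [exists u in vboundary e B, X u == a].

Lemma free_Ac (V : finType) (e : rel V) (q : nat) (X c : config V q) (B : {set V}) a :
  freec e X c B a -> (0 < #|Ac B (replace X c B) a|)%N.
Proof.
case/andP => /existsP [v /andP [vB cv]] _; rewrite card_gt0; apply/set0Pn; exists v.
by rewrite inE vB /replace ffunE vB.
Qed.

Lemma color_bound (V : finType) (e : rel V) (q : nat) (X c : config V q) (B : {set V})
    (D k : nat) r y a :
  simple_graph e -> connected_graph e -> (forall v, degree e v <= D)%N -> (2 <= D)%N ->
  induced_connected e B -> #|B| = k -> r \in B -> y \notin B ->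
  (k * #|Mc e B (replace X c B) a| <=
     ((D - 1) * k + 1) * (#|Ac B (replace X c B) a| - freec e X c B a))%N.
Proof.
move=> sg gc hD D2 conn hk rB yB; set Y := replace X c B.
have YB v : v \in B -> Y v = c v by move=> vB; rewrite /Y /replace ffunE vB.
have YnB v : v \notin B -> Y v = X v by move=> vB; rewrite /Y /replace ffunE (negbTE vB).
have AB : Ac B Y a \subset B by apply/subsetP => v; rewrite inE => /andP [].
case fr: (freec e X c B a).
- have s1 := free_Ac fr; rewrite -/Y in s1.
  have [x0 x0A] : exists x0, x0 \in Ac B Y a by apply/set0Pn; rewrite -card_gt0.
  have yA : y \notin Ac B Y a by apply: contra yB; apply: (subsetP AB).
  have [x [y0 [xA y0A exy]]] := cross (gc x0 y) x0A yA.
  have hf : forall u w, e u w -> u \in B -> w \notin B -> Y w != a.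
    move=> u w euw uB wB; rewrite YnB //; move: fr => /andP [_]; apply: contra => Xw.
    apply/existsP; exists w; rewrite Xw andbT inE wB /=; apply/existsP; exists u.
    by rewrite uB (proj1 sg) euw.
  have [h1 h2] := free_bound sg hD hf xA y0A exy.
  have := arith D2 s1 h1 h2; set m := #|Mc _ _ _ _|; set s := #|Ac _ _ _|.
  move=> hm; rewrite subn1; nia.
- rewrite subn0; have := @nonfree_bound V _ e B Y a D sg hD.
  set m := #|Mc _ _ _ _|; set s := #|Ac _ _ _|.
  case: (boolP (B \subset Ac B Y a)) => sub.
  + have eqA : Ac B Y a = B by apply/eqP; rewrite eqEsubset AB sub.
    have hI : (k - 1 <= #|IA e B (Ac B Y a)|)%N.
      rewrite eqA.
      have sub2 : IA e B (B :\ r) \subset IA e B B.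
        by apply: edges_mono => u w /and4P [-> -> -> _].
      apply: leq_trans (subset_leq_card sub2).
      have := tree (A := B :\ r) conn rB; rewrite !inE eqxx /= subsetDl => /(_ isT isT).
      by rewrite (cardsD1 r B) rB add1n in hk; rewrite -hk subSS subn0.
    have sk : s = k by rewrite /s eqA.
    rewrite sk => hm; nia.
  + have [r' r'B r'A] : exists2 r', r' \in B & r' \notin Ac B Y a.
      by move/subsetPn: sub => [r' ? ?]; exists r'.
    have := tree conn r'B r'A AB => hI hm.
    have sk : (s <= k)%N by rewrite -hk; apply: subset_leq_card.
    nia.
Qed.

Lemma sum_Ac (V : finType) (q : nat) (B : {set V}) (Y : V -> 'I_q) :
  \sum_(a : 'I_q) #|Ac B Y a| = #|B|.
Proof.
rewrite -sum1_card (partition_big Y xpredT) //=.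
apply: eq_bigr => a _; rewrite -sum1_card; apply: eq_bigl => v; by rewrite !inE.
Qed.

Lemma sum_free (V : finType) (e : rel V) (q : nat) (X c : config V q) (B : {set V}) :
  \sum_(a : 'I_q) (freec e X c B a : nat) = nfree e X c B.
Proof.
rewrite /nfree -sum1_card [RHS]big_mkcond /=; apply: eq_bigr => a _.
by rewrite inE; rewrite -/(freec e X c B a); case: (freec e X c B a).
Qed.

Lemma block_bound (V : finType) (e : rel V) (q : nat) (X c : config V q) (B : {set V})
    (D k : nat) r y :
  simple_graph e -> connected_graph e -> (forall v, degree e v <= D)%N -> (2 <= D)%N ->
  induced_connected e B -> #|B| = k -> r \in B -> y \notin B ->
  (k * mu e X c B <= ((D - 1) * k + 1) * (k - nfree e X c B))%N.
Proof.
move=> sg gc hD D2 conn hk rB yB.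
have h0 := @mu_le V e q X c B. apply: leq_trans (leq_mul (leqnn k) h0) _.
rewrite big_distrr /=.
apply: (@leq_trans (\sum_(a < q) ((D-1)*k+1) * (#|Ac B (replace X c B) a| - freec e X c B a))).
  by apply: leq_sum => a _; apply: (@color_bound V e q X c B D k r y a).

rewrite -big_distrr /= leq_mul2l; apply/orP; right.
rewrite sumnB; last by move=> a _; case fr: (freec e X c B a) => //=; exact: (free_Ac fr).
by rewrite sum_Ac sum_free hk.
Qed.

Lemma term_bound (m f k D : nat) : (f < k)%N -> (1 <= D)%N ->
  (k * m <= ((D - 1) * k + 1) * (k - f))%N ->
  ((m%:R / (k - f)%N%:R : rat) <= D%:R - 1 + 1 / k%:R)%R.
Proof.
move=> fk D1 h.
have k0 : (0 < k)%N by lia.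
have -> : ((D%:R - 1 + 1 / k%:R)%R : rat) = (((D - 1) * k + 1)%N%:R / k%:R)%R.
  have kR : (k%:R : rat) != 0%R by rewrite pnatr_eq0 -lt0n.
  rewrite natrD natrM natrB // mulrDl mulfK //; lra.
rewrite ler_pdivrMr ?ltr0n ?subn_gt0 // mulrAC ler_pdivlMr ?ltr0n //.
by rewrite -natrM -natrM ler_nat mulnC.
Qed.

Lemma outside (V : finType) (B : {set V}) : (#|B| < #|V|)%N -> exists y, y \notin B.
Proof.
move=> lt; case: (pickP [pred y | y \notin B]) => [y /= yB|H]; first by exists y.
suff : (#|V| <= #|B|)%N by lia.
rewrite -cardsT; apply: subset_leq_card; apply/subsetP => x _.
by move: (H x) => /= /negbFE.
Qed.

Lemma deg2 (V : finType) (e : rel V) (B : {set V}) r y :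
  simple_graph e -> connected_graph e -> induced_connected e B -> (2 <= #|B|)%N ->
  r \in B -> y \notin B -> (2 <= max_degree e)%N.
Proof.
move=> [esym eirr] gc conn B2 rB yB.
have [x [y' [xB y'B exy]]] := cross (gc r y) rB yB.
have [z zBx] : exists z, z \in B :\ x.
  apply/set0Pn; rewrite -card_gt0; move: B2; rewrite (cardsD1 x B) xB; lia.
move: zBx; rewrite !inE => /andP [zx zB].
have xx : x \in [set x] by rewrite inE.
have zn : z \notin [set x] by rewrite inE.
have [x' [w [x'x wx /and3P [exw _ wB]]]] := cross (conn x z xB zB) xx zn.
move: x'x; rewrite inE => /eqP ex'; subst x'.
apply: leq_trans (leq_bigmax x).
have sub : [set y'; w] \subset [set w0 | e x w0].
  by apply/subsetP => u; rewrite !inE => /orP [] /eqP ->.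
apply: leq_trans (subset_leq_card sub); rewrite cards2.
by case: eqP => // E; rewrite E wB in y'B.
Qed.

Unset Implicit Arguments.

Theorem lemma2p6 (V : finType) (e : rel V) (q : nat) (k : nat)
    (S : V -> {set V}) :
  simple_graph e -> connected_graph e -> (0 < q)%N ->
  (2 <= k)%N -> (k <= #|V| - 1)%N ->
  block_system e k S ->
  (mu_plus e q S <= (max_degree e)%:R - 1 + 1 / k%:R :> rat)%R.
Proof.
move=> sg gc q0 k2 kn bs.
set D := max_degree e.
have hD : forall v, (degree e v <= D)%N.
  by move=> v; rewrite /D /max_degree; apply: (leq_bigmax v).
have [v0 _|H] := pickP (fun _ : V => true); last first.
  have : #|V| = 0 by apply: eq_card0 => x; exact: H.
  lia.
have facts v : exists y, y \notin S v.
  by apply: outside; case: (bs v) => _ -> _; lia.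
have D2 : (2 <= D)%N.
  have [y yB] := facts v0; case: (bs v0) => vB hk conn.
  by apply: (deg2 (B := S v0) (r := v0) (y := y)) => //; rewrite hk.
have R0 : (0 <= (D%:R - 1 + 1 / k%:R : rat))%R.
  have : (1 <= (D%:R : rat))%R by rewrite ler1n; lia.
  have : (0 <= 1 / (k%:R : rat))%R by rewrite divr_ge0 ?ler0n.
  lra.
rewrite /mu_plus; apply: bigmax_le => // v _.
apply: bigmax_le => // X _; apply: bigmax_le => // f _.
rewrite /mu_plus_f; apply: bigmax_le => // c _ /=.
case: eqP => // Ef.
have [y yB] := facts v; case: (bs v) => vB hk conn.
have := ltn_ord f; move: Ef; move: (nat_of_ord f) => f' Ef.
rewrite hk => fk; apply: term_bound => //; first lia.
rewrite -Ef; apply: (@block_bound V e q X _ (S v) D k v y) => //.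
Qed.
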